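(* Let $(X,d_X)$ and $(Y,d_Y)$ be metric spaces and let $d$ be a partial distance-preserving metric on $X\times Y$ with $d_\infty\le d$. Then $(X\times Y,d)$ is ultrametric if and only if for all compact sets $W\subseteq X$, $Z\subseteq Y$ and every $\varepsilon>0$ both $$\mathcal N_\varepsilon(W\times Z)=\mathcal M_\varepsilon(W\times Z)\quad\text{and}\quad \mathcal M_\varepsilon(W\times Z)=\mathcal M_\varepsilon(W)\cdot\mathcal M_\varepsilon(Z)$$ hold, where the quantities for $W$, $Z$, $W\times Z$ are computed in $(X,d_X)$, $(Y,d_Y)$, $(X\times Y,d)$ respectively.
   Context: $d_\infty((x_1,y_1),(x_2,y_2))=\max\{d_X(x_1,x_2),d_Y(y_1,y_2)\}$. A metric $d$ on $X\times Y$ is partial distance-preserving if $d((x_1,y),(x_2,y))=d_X(x_1,x_2)$ and $d((x,y_1),(x,y_2))=d_Y(y_1,y_2)$ for all $x,x_1,x_2\in X$, $y,y_1,y_2\in Y$. Ultrametric: $\rho(a,b)\le\max\{\rho(a,c),\rho(c,b)\}$. In a metric space $(M,\rho)$ with closed balls $B(c,r)=\{x:\rho(x,c)\le r\}$: $C$ is an $\varepsilon$-net for $V$ if $V\subseteq\bigcup_{c\in C}B(c,\varepsilon)$; $A$ is $\varepsilon$-distinguishable if $\rho(a,b)>\varepsilon$ for distinct $a,b\in A$. For totally bounded $V$, the covering number $\mathcal N_\varepsilon(V)$ is the smallest cardinality of a subset of $V$ that is an $\varepsilon$-net for $V$, and the packing number $\mathcal M_\varepsilon(V)$ is the maximal cardinality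 of an $\varepsilon$-distinguishable subset of $V$. *)

(* Defs.v *)
From Stdlib Require Import Reals List Classical ClassicalEpsilon.
Open Scope R_scope.

Definition is_metric {M : Type} (rho : M -> M -> R) : Prop :=
  (forall a b, 0 <= rho a b) /\
  (forall a b, rho a b = 0 <-> a = b) /\
  (forall a b, rho a b = rho b a) /\
  (forall a b c, rho a b <= rho a c + rho c b).

Definition ultrametric {M : Type} (rho : M -> M -> R) : Prop :=
  forall a b c, rho a b <= Rmax (rho a c) (rho c b).

Definition d_inf {X Y : Type} (dX : X -> X -> R) (dY : Y -> Y -> R)
  (p q : X * Y) : R := Rmax (dX (fst p) (fst q)) (dY (snd p) (snd q)).

Definition partial_distance_preserving {X Y : Type} (dX : X -> X -> R)
  (dY : Y -> Y -> R) (d : X * Y -> X * Y -> R) : Prop :=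
  (forall x1 x2 y, d (x1, y) (x2, y) = dX x1 x2) /\
  (forall x y1 y2, d (x, y1) (x, y2) = dY y1 y2).

Definition is_open {M : Type} (rho : M -> M -> R) (O : M -> Prop) : Prop :=
  forall x, O x -> exists r, 0 < r /\ forall y, rho x y < r -> O y.

Definition compact_set {M : Type} (rho : M -> M -> R) (W : M -> Prop) : Prop :=
  forall (I : Type) (U : I -> M -> Prop),
    (forall i, is_open rho (U i)) ->
    (forall x, W x -> exists i, U i x) ->
    exists l : list I, forall x, W x -> exists i, In i l /\ U i x.

Definition setX {X Y : Type} (W : X -> Prop) (Z : Y -> Prop) : X * Y -> Prop :=
  fun p => W (fst p) /\ Z (snd p).

Definition cball {M : Type} (rho : M -> M -> R) (c : M) (r : R) : M -> Prop :=
  fun x => rho x c <= r.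

(* C (a finite subset, given as a duplicate-free list) is an eps-net for V *)
Definition is_net {M : Type} (rho : M -> M -> R) (eps : R) (C : list M)
  (V : M -> Prop) : Prop :=
  forall v, V v -> exists c, In c C /\ cball rho c eps v.

Definition distinguishable {M : Type} (rho : M -> M -> R) (eps : R)
  (A : list M) : Prop :=
  forall a b, In a A -> In b A -> a <> b -> eps < rho a b.

Definition subset_of {M : Type} (l : list M) (V : M -> Prop) : Prop :=
  forall x, In x l -> V x.

Definition is_covering_number {M : Type} (rho : M -> M -> R) (V : M -> Prop)
  (eps : R) (n : nat) : Prop :=
  (exists C, NoDup C /\ subset_of C V /\ is_net rho eps C V /\ length C = n) /\
  (forall C, NoDup C -> subset_of C V -> is_net rho eps C V -> (n <= length C)%nat).

Definition is_packing_number {M : Type} (rho : M -> M -> R) (V : M -> Prop)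
  (eps : R) (n : nat) : Prop :=
  (exists A, NoDup A /\ subset_of A V /\ distinguishable rho eps A /\ length A = n) /\
  (forall A, NoDup A -> subset_of A V -> distinguishable rho eps A -> (length A <= n)%nat).

(* The numbers themselves (well-defined for totally bounded V, in particular
   compact V; an arbitrary value otherwise). *)
Definition covering_number {M : Type} (rho : M -> M -> R) (V : M -> Prop)
  (eps : R) : nat :=
  epsilon (inhabits 0%nat) (fun n => is_covering_number rho V eps n).

Definition packing_number {M : Type} (rho : M -> M -> R) (V : M -> Prop)
  (eps : R) : nat :=
  epsilon (inhabits 0%nat) (fun n => is_packing_number rho V eps n).

(* Main.v *)
Require Import Defs.
From Stdlib Require Import Reals List Classical ClassicalEpsilon Lra Lia Psatz.
Open Scope R_scope.

Lemma inj_length {A B : Type} (Rl : A -> B -> Prop) (la : list A) : forall lb : list B,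
  NoDup la ->
  (forall a, In a la -> exists b, In b lb /\ Rl a b) ->
  (forall a a' b, In a la -> In a' la -> In b lb -> Rl a b -> Rl a' b -> a = a') ->
  (length la <= length lb)%nat.
Proof.
  induction la as [|a la IH]; intros lb Hnd Hex Hinj; simpl; [lia|].
  inversion Hnd as [|? ? Hnin Hnd']; subst.
  destruct (Hex a (or_introl eq_refl)) as [b [Hb Rab]].
  destruct (in_split b lb Hb) as [l1 [l2 Heq]]. subst lb.
  assert (length la <= length (l1 ++ l2))%nat.
  { apply IH; auto.
    - intros a' Ha'. destruct (Hex a' (or_intror Ha')) as [b' [Hb' R']].
      exists b'; split; auto.
      apply in_app_or in Hb'. destruct Hb' as [H|[H|H]]; try (apply in_or_app; auto).
      subst b'. exfalso.
      assert (a' = a) by (apply (Hinj a' a b); simpl; auto).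
      subst; contradiction.
    - intros x x' y Hx Hx' Hy R1 R2. apply (Hinj x x' y); simpl; auto.
      apply in_app_or in Hy. apply in_or_app. simpl. tauto. }
  rewrite length_app in *. simpl. lia.
Qed.

Lemma nat_min_ex (P : nat -> Prop) : (exists n, P n) -> exists n, P n /\ forall m, P m -> (n <= m)%nat.
Proof.
  intros [n Hn]. revert Hn. induction n as [n IH] using (well_founded_induction Wf_nat.lt_wf).
  intros Hn. destruct (classic (exists m, P m /\ (m < n)%nat)) as [[m [Pm Hlt]]|Hno].
  - exact (IH m Hlt Pm).
  - exists n; split; auto. intros m Pm. destruct (Nat.le_gt_cases n m); auto.
    exfalso; apply Hno; eauto.
Qed.

Lemma nat_max_ex (P : nat -> Prop) B : (exists n, P n) -> (forall n, P n -> (n <= B)%nat) ->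
  exists n, P n /\ forall m, P m -> (m <= n)%nat.
Proof.
  intros [n0 H0] Hb. apply NNPP; intro Hno.
  assert (Hstep: forall n, P n -> exists m, P m /\ (n < m)%nat).
  { intros n Pn. apply NNPP; intro Hc. apply Hno. exists n; split; auto.
    intros m Pm. destruct (Nat.le_gt_cases m n); auto. exfalso; apply Hc; eauto. }
  assert (H : forall k, exists n, P n /\ (k <= n)%nat).
  { induction k.
    - exists n0; split; auto; lia.
    - destruct IHk as [n [Pn Hk]]. destruct (Hstep n Pn) as [m [Pm Hm]].
      exists m; split; auto; lia. }
  destruct (H (S B)) as [n [Pn Hn]]. specialize (Hb n Pn). lia.
Qed.

Lemma eps_unique (P : nat -> Prop) n : P n -> (forall a b, P a -> P b -> a = b) ->
  epsilon (inhabits 0%nat) P = n.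
Proof. intros Hn Hu. apply Hu; [apply epsilon_spec; eauto| auto]. Qed.

Lemma cov_eq {M} (rho:M->M->R) V eps n : is_covering_number rho V eps n ->
  covering_number rho V eps = n.
Proof.
  intros Hn. unfold covering_number. apply eps_unique; auto.
  intros a b [[C [H1 [H2 [H3 e]]]] Ha] [[C' [H1' [H2' [H3' e']]]] Hb].
  pose proof (Ha C' H1' H2' H3'). pose proof (Hb C H1 H2 H3). lia.
Qed.

Lemma pack_eq {M} (rho:M->M->R) V eps n : is_packing_number rho V eps n ->
  packing_number rho V eps = n.
Proof.
  intros Hn. unfold packing_number. apply eps_unique; auto.
  intros a b [[C [H1 [H2 [H3 e]]]] Ha] [[C' [H1' [H2' [H3' e']]]] Hb].
  pose proof (Ha C' H1' H2' H3'). pose proof (Hb C H1 H2 H3). lia.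
Qed.

Lemma cov_exists {M} (rho:M->M->R) V eps :
  (exists C, NoDup C /\ subset_of C V /\ is_net rho eps C V) ->
  is_covering_number rho V eps (covering_number rho V eps).
Proof.
  intros [C HC]. unfold covering_number. apply epsilon_spec.
  destruct (nat_min_ex (fun n => exists C, NoDup C /\ subset_of C V /\ is_net rho eps C V /\ length C = n)) as [n [Hn Hmin]].
  { exists (length C). exists C. tauto. }
  exists n. split; [exact Hn|]. intros C' a b c. apply Hmin. exists C'. tauto.
Qed.

Lemma pack_exists {M} (rho:M->M->R) V eps L :
  (forall x, V x -> In x L) ->
  is_packing_number rho V eps (packing_number rho V eps).
Proof.
  intros HL. unfold packing_number. apply epsilon_spec.
  destruct (nat_max_ex (fun n => exists A, NoDup A /\ subset_of A V /\ distinguishable rho eps A /\ length A = n) (length L)) as [n [Hn Hmax]].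
  { exists 0%nat, nil. split; [constructor|]. split; [intros x []|].
    split; [intros a b []|]. reflexivity. }
  { intros n [A [a [b [c e]]]]. subst n. apply NoDup_incl_length; auto.
    intros x Hx; apply HL, b, Hx. }
  exists n. split; [exact Hn|]. intros A a b c. apply Hmax. exists A. tauto.
Qed.

Lemma rep_numbers {M} (rho : M->M->R) V eps Rl :
  (forall a b, rho a b = rho b a) ->
  (forall a b c, V a -> V b -> V c -> rho a b <= Rmax (rho a c) (rho c b)) ->
  NoDup Rl -> subset_of Rl V -> distinguishable rho eps Rl -> is_net rho eps Rl V ->
  is_covering_number rho V eps (length Rl) /\ is_packing_number rho V eps (length Rl).
Proof.
  intros Hsym Hult Hnd Hsub Hdis Hnet. split; split.
  - exists Rl; auto.
  - intros C HC HsC HnC.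
    apply (inj_length (fun r c => rho r c <= eps)); auto.
    + intros r Hr. destruct (HnC r (Hsub r Hr)) as [c [Hc Hrc]]. exists c; auto.
    + intros r r' c Hr Hr' Hc H1 H2. apply NNPP; intro Hne.
      pose proof (Hdis r r' Hr Hr' Hne).
      pose proof (Hult r r' c (Hsub r Hr) (Hsub r' Hr') (HsC c Hc)).
      rewrite (Hsym c r') in H0.
      assert (Rmax (rho r c) (rho r' c) <= eps) by (apply Rmax_lub; auto). lra.
  - exists Rl; auto.
  - intros A HA HsA HdA.
    apply (inj_length (fun a r => rho a r <= eps)); auto.
    + intros a Ha. destruct (Hnet a (HsA a Ha)) as [c [Hc Hrc]]. exists c; auto.
    + intros r r' c Hr Hr' Hc H1 H2. apply NNPP; intro Hne.
      pose proof (HdA r r' Hr Hr' Hne).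
      pose proof (Hult r r' c (HsA r Hr) (HsA r' Hr') (Hsub c Hc)).
      rewrite (Hsym c r') in H0.
      assert (Rmax (rho r c) (rho r' c) <= eps) by (apply Rmax_lub; auto). lra.
Qed.

Lemma empty_numbers {M} (rho : M->M->R) V eps : (forall x, ~ V x) ->
  is_covering_number rho V eps 0 /\ is_packing_number rho V eps 0.
Proof.
  intros HV. split; split.
  - exists nil. split; [constructor|]. split; [intros x []|].
    split; [intros v Hv; exfalso; exact (HV v Hv)|reflexivity].
  - intros; lia.
  - exists nil. split; [constructor|]. split; [intros x []|].
    split; [intros a b []|reflexivity].
  - intros A _ Hs _. destruct A as [|a A]; simpl; [lia|].
    exfalso; apply (HV a); apply Hs; left; auto.
Qed.

Lemma extract {M} (rho:M->M->R) V eps (L : list M) :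
  (forall a b, rho a b = rho b a) -> (forall a, rho a a = 0) -> 0 <= eps ->
  exists Rl, NoDup Rl /\ subset_of Rl V /\ distinguishable rho eps Rl /\
    forall l, In l L -> V l -> exists r, In r Rl /\ rho l r <= eps.
Proof.
  intros Hsym H0 He. induction L as [|x L IH].
  - exists nil. split; [constructor|]. split; [intros y []|].
    split; [intros a b []|]. intros l [].
  - destruct IH as [R' [H1 [H2 [H3 H4]]]].
    destruct (classic (V x /\ ~ exists r, In r R' /\ rho x r <= eps)) as [[Vx Hno]|Hc].
    + exists (x :: R'). split; [|split; [|split]].
      * constructor; auto. intro Hin. apply Hno. exists x; split; auto. rewrite H0; auto.
      * intros y [<-|Hy]; auto.
      * intros a b [<-|Ha] [<-|Hb] Hab.
        -- exfalso; apply Hab; reflexivity.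
        -- apply Rnot_le_lt. intro Hle. apply Hno; eauto.
        -- rewrite Hsym. apply Rnot_le_lt. intro Hle. apply Hno; eauto.
        -- apply H3; auto.
      * intros l [<-|Hl] Vl.
        -- exists x; split; [left; auto| rewrite H0; auto].
        -- destruct (H4 l Hl Vl) as [r [Hr Hlr]]. exists r; split; [right|]; auto.
    + exists R'. split; [|split; [|split]]; auto.
      intros l [<-|Hl] Vl; auto.
      apply NNPP; intro Hn. apply Hc. split; auto.
Qed.

Lemma compact_reps {M} (rho:M->M->R) V eps : is_metric rho ->
  (forall a b c, V a -> V b -> V c -> rho a b <= Rmax (rho a c) (rho c b)) ->
  compact_set rho V -> 0 < eps ->
  exists Rl, NoDup Rl /\ subset_of Rl V /\ distinguishable rho eps Rl /\ is_net rho eps Rl V.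
Proof.
  intros [Hpos [Hz [Hsym Htri]]] Hult Hc He.
  destruct (Hc M (fun x y => V x /\ rho x y < eps)) as [L HL].
  - intros x y [Vx Hxy]. exists (eps - rho x y). split; [lra|].
    intros z Hz'. split; auto. pose proof (Htri x z y). lra.
  - intros x Vx. exists x. split; auto. assert (rho x x = 0) by (apply Hz; auto). lra.
  - destruct (extract rho V eps L Hsym (fun a => proj2 (Hz a a) eq_refl) (Rlt_le _ _ He))
      as [Rl [H1 [H2 [H3 H4]]]].
    exists Rl; split; [|split; [|split]]; auto.
    intros v Vv. destruct (HL v Vv) as [l [Hl [Vl Hlv]]].
    destruct (H4 l Hl Vl) as [r [Hr Hlr]]. exists r; split; auto.
    unfold cball. eapply Rle_trans; [apply (Hult v r l); auto|].
    apply Rmax_lub; [rewrite Hsym; lra| auto].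
Qed.

Lemma compact_list {M} (rho:M->M->R) (L:list M) : compact_set rho (fun x => In x L).
Proof.
  intros I U _ Hcov. revert Hcov. induction L as [|a L IH]; intros Hcov.
  - exists nil. intros x [].
  - destruct (Hcov a (or_introl eq_refl)) as [i Hi].
    destruct IH as [l Hl]. { intros x Hx. apply Hcov. right; auto. }
    exists (i :: l). intros x [<-|Hx].
    + exists i; split; [left|]; auto.
    + destruct (Hl x Hx) as [j [Hj Uj]]. exists j; split; [right|]; auto.
Qed.

Lemma NoDup_prod {A B} (l:list A) (l':list B) : NoDup l -> NoDup l' -> NoDup (list_prod l l').
Proof.
  intros H H'; induction H as [|a l Hna Hl IH]; simpl; [constructor|].
  apply NoDup_app; auto.
  - apply NoDup_map_NoDup_ForallPairs; auto. intros x y _ _ E; injection E; auto.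
  - intros p Hp1 Hp2. apply in_map_iff in Hp1. destruct Hp1 as [y [<- _]].
    apply in_prod_iff in Hp2. tauto.
Qed.

Lemma two_points {M} (rho:M->M->R) (u v : M) m : rho u v <= m -> rho v u <= m ->
  forall A, NoDup A -> subset_of A (fun x => In x (u::v::nil)) -> distinguishable rho m A ->
  (length A <= 1)%nat.
Proof.
  intros Huv Hvu A Hnd Hs Hd. destruct A as [|a [|b A]]; simpl; try lia. exfalso.
  inversion Hnd as [|? ? Hn Hnd']; subst.
  assert (Hab : a <> b) by (intro; subst; apply Hn; left; auto).
  assert (Ha := Hs a (or_introl eq_refl)); assert (Hb := Hs b (or_intror (or_introl eq_refl))).
  pose proof (Hd a b (or_introl eq_refl) (or_intror (or_introl eq_refl)) Hab).
  simpl in Ha, Hb.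
  destruct Ha as [<-|[<-|[]]]; destruct Hb as [<-|[<-|[]]]; try (exfalso; apply Hab; reflexivity); lra.
Qed.

Lemma rmax_combine a b c e f g : a <= Rmax b c -> e <= Rmax f g ->
  Rmax a e <= Rmax (Rmax b f) (Rmax c g).
Proof.
  intros H1 H2. apply Rmax_lub.
  - eapply Rle_trans; [exact H1|]. apply Rmax_lub.
    + apply Rle_trans with (Rmax b f); [apply Rmax_l|apply Rmax_l].
    + apply Rle_trans with (Rmax c g); [apply Rmax_l|apply Rmax_r].
  - eapply Rle_trans; [exact H2|]. apply Rmax_lub.
    + apply Rle_trans with (Rmax b f); [apply Rmax_r|apply Rmax_l].
    + apply Rle_trans with (Rmax c g); [apply Rmax_r|apply Rmax_r].
Qed.

Theorem proposition4p4 (X Y : Type) (dX : X -> X -> R) (dY : Y -> Y -> R)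
  (d : X * Y -> X * Y -> R)
  (hX : is_metric dX) (hY : is_metric dY) (hd : is_metric d)
  (hpd : partial_distance_preserving dX dY d)
  (hinf : forall p q, d_inf dX dY p q <= d p q) :
  ultrametric d <->
  (forall (W : X -> Prop) (Z : Y -> Prop) (eps : R),
     compact_set dX W -> compact_set dY Z -> 0 < eps ->
     covering_number d (setX W Z) eps = packing_number d (setX W Z) eps /\
     packing_number d (setX W Z) eps =
       (packing_number dX W eps * packing_number dY Z eps)%nat).
Proof.
  pose proof hX as [Xpos [Xz [Xs Xt]]]. pose proof hY as [Ypos [Yz [Ys Yt]]].
  pose proof hd as [Dpos [Dz [Ds Dt]]]. destruct hpd as [HpX HpY].
  split.
  - intros Hu.
    assert (Hdeq : forall x1 y1 x2 y2, d (x1,y1) (x2,y2) = Rmax (dX x1 x2) (dY y1 y2)).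
    { intros x1 y1 x2 y2. apply Rle_antisym.
      - pose proof (Hu (x1,y1) (x2,y2) (x2,y1)). rewrite HpX, HpY in H. exact H.
      - pose proof (hinf (x1,y1) (x2,y2)). unfold d_inf in H; simpl in H. exact H. }
    assert (HXu : forall y : Y, ultrametric dX).
    { intros y a b c. rewrite <- (HpX a b y), <- (HpX a c y), <- (HpX c b y). apply Hu. }
    assert (HYu : forall x : X, ultrametric dY).
    { intros x a b c. rewrite <- (HpY x a b), <- (HpY x a c), <- (HpY x c b). apply Hu. }
    intros W Z eps HW HZ He.
    destruct (classic (exists w, W w)) as [[w0 Hw0]|HWe].
    2:{ assert (HV : forall p, ~ setX W Z p) by (intros p [Hp _]; apply HWe; eauto).
        destruct (empty_numbers d (setX W Z) eps HV) as [C1 P1].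
        assert (HW0 : forall x, ~ W x) by (intros x Hx; apply HWe; eauto).
        destruct (empty_numbers dX W eps HW0) as [_ P2].
        rewrite (cov_eq _ _ _ _ C1), (pack_eq _ _ _ _ P1), (pack_eq _ _ _ _ P2). simpl. auto. }
    destruct (classic (exists z, Z z)) as [[z0 Hz0]|HZe].
    2:{ assert (HV : forall p, ~ setX W Z p) by (intros p [_ Hp]; apply HZe; eauto).
        destruct (empty_numbers d (setX W Z) eps HV) as [C1 P1].
        assert (HZ0 : forall x, ~ Z x) by (intros x Hx; apply HZe; eauto).
        destruct (empty_numbers dY Z eps HZ0) as [_ P2].
        rewrite (cov_eq _ _ _ _ C1), (pack_eq _ _ _ _ P1), (pack_eq _ _ _ _ P2).
        rewrite Nat.mul_0_r. auto. }
    destruct (compact_reps dX W eps hX (fun a b c _ _ _ => HXu z0 a b c) HW He)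
      as [RW [W1 [W2 [W3 W4]]]].
    destruct (compact_reps dY Z eps hY (fun a b c _ _ _ => HYu w0 a b c) HZ He)
      as [RZ [Z1 [Z2 [Z3 Z4]]]].
    destruct (rep_numbers dX W eps RW Xs (fun a b c _ _ _ => HXu z0 a b c) W1 W2 W3 W4) as [_ PW].
    destruct (rep_numbers dY Z eps RZ Ys (fun a b c _ _ _ => HYu w0 a b c) Z1 Z2 Z3 Z4) as [_ PZ].
    destruct (rep_numbers d (setX W Z) eps (list_prod RW RZ) Ds (fun a b c _ _ _ => Hu a b c))
      as [CP PP].
    + apply NoDup_prod; auto.
    + intros [a b] Hab. apply in_prod_iff in Hab. split; simpl; [apply W2|apply Z2]; tauto.
    + intros [a1 b1] [a2 b2] H1 H2 Hne. apply in_prod_iff in H1, H2. rewrite Hdeq.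
      destruct (classic (a1 = a2)) as [<-|Hna].
      * assert (b1 <> b2) by (intro; subst; apply Hne; auto).
        eapply Rlt_le_trans; [apply (Z3 b1 b2); tauto|apply Rmax_r].
      * eapply Rlt_le_trans; [apply (W3 a1 a2); tauto|apply Rmax_l].
    + intros [w z] [Hw Hz]; simpl in Hw, Hz.
      destruct (W4 w Hw) as [rw [Hrw Hw']]. destruct (Z4 z Hz) as [rz [Hrz Hz']].
      exists (rw, rz). split; [apply in_prod; auto|]. unfold cball in *. rewrite Hdeq.
      apply Rmax_lub; auto.
    + rewrite (cov_eq _ _ _ _ CP), (pack_eq _ _ _ _ PP), (pack_eq _ _ _ _ PW), (pack_eq _ _ _ _ PZ).
      rewrite length_prod. auto.
  - intros Hc.
    assert (HXu : forall y0 : Y, ultrametric dX).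
    { intros y0 x1 x2 x3.
      set (m := Rmax (dX x1 x3) (dX x3 x2)).
      assert (H13 : dX x1 x3 <= m) by apply Rmax_l.
      assert (H32 : dX x3 x2 <= m) by apply Rmax_r.
      destruct (Rle_dec (dX x1 x2) m) as [ok|Hgt]; [exact ok|exfalso].
      apply Rnot_le_lt in Hgt.
      assert (Hm : 0 < m).
      { destruct (Rle_lt_dec m 0) as [Hle|]; auto. exfalso.
        pose proof (Xpos x1 x3); pose proof (Xpos x3 x2).
        assert (x1 = x3) by (apply Xz; lra). assert (x3 = x2) by (apply Xz; lra).
        assert (dX x1 x2 = 0) by (apply Xz; congruence). lra. }
      destruct (Hc (fun x => In x (x1::x2::x3::nil)) (fun y => In y (y0::nil)) m
        (compact_list _ _) (compact_list _ _) Hm) as [Heq _].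
      set (V := setX (fun x => In x (x1::x2::x3::nil)) (fun y => In y (y0::nil))) in *.
      assert (Hcov : is_covering_number d V m (covering_number d V m)).
      { apply cov_exists. exists ((x3,y0)::nil). split; [|split].
        - constructor; [intros []|constructor].
        - intros p [<-|[]]. unfold V, setX; simpl. intuition.
        - intros [vx vy] [Hvx Hvy]; simpl in Hvx, Hvy. exists (x3,y0). split; [left; auto|].
          unfold cball. destruct Hvy as [<-|[]]. rewrite HpX.
          destruct Hvx as [<-|[<-|[<-|[]]]]; try lra.
          rewrite Xs; lra.
          assert (dX x3 x3 = 0) by (apply Xz; auto). lra. }
      assert (Hpack : is_packing_number d V m (packing_number d V m)).
      { apply (pack_exists _ _ _ (list_prod (x1::x2::x3::nil) (y0::nil))).
        intros [a b] [Ha Hb]. apply in_prod; auto. }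
      assert (Hne : x1 <> x2).
      { intro E; subst. assert (dX x2 x2 = 0) by (apply Xz; auto). lra. }
      pose proof (proj2 Hcov ((x3,y0)::nil)) as C1.
      pose proof (proj2 Hpack ((x1,y0)::(x2,y0)::nil)) as P1.
      assert (covering_number d V m <= 1)%nat.
      { apply C1.
        - constructor; [intros []|constructor].
        - intros p [<-|[]]. unfold V, setX; simpl. intuition.
        - intros [vx vy] [Hvx Hvy]; simpl in Hvx, Hvy. exists (x3,y0). split; [left; auto|].
          unfold cball. destruct Hvy as [<-|[]]. rewrite HpX.
          destruct Hvx as [<-|[<-|[<-|[]]]]; try lra.
          rewrite Xs; lra.
          assert (dX x3 x3 = 0) by (apply Xz; auto). lra. }
      assert (2 <= packing_number d V m)%nat.
      { apply P1.
        - constructor.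
          + intros [E|[]]. injection E; intros; subst; apply Hne; auto.
          + constructor; [intros []|constructor].
        - intros p [<-|[<-|[]]]; unfold V, setX; simpl; intuition.
        - intros a b [<-|[<-|[]]] [<-|[<-|[]]] Hab; try (exfalso; apply Hab; reflexivity);
            rewrite HpX; [|rewrite Xs]; lra. }
      lia. }
    assert (HYu : forall x0 : X, ultrametric dY).
    { intros x0 y1 y2 y3.
      set (m := Rmax (dY y1 y3) (dY y3 y2)).
      assert (H13 : dY y1 y3 <= m) by apply Rmax_l.
      assert (H32 : dY y3 y2 <= m) by apply Rmax_r.
      destruct (Rle_dec (dY y1 y2) m) as [ok|Hgt]; [exact ok|exfalso].
      apply Rnot_le_lt in Hgt.
      assert (Hm : 0 < m).
      { destruct (Rle_lt_dec m 0) as [Hle|]; auto. exfalso.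
        pose proof (Ypos y1 y3); pose proof (Ypos y3 y2).
        assert (y1 = y3) by (apply Yz; lra). assert (y3 = y2) by (apply Yz; lra).
        assert (dY y1 y2 = 0) by (apply Yz; congruence). lra. }
      destruct (Hc (fun x => In x (x0::nil)) (fun y => In y (y1::y2::y3::nil)) m
        (compact_list _ _) (compact_list _ _) Hm) as [Heq _].
      set (V := setX (fun x => In x (x0::nil)) (fun y => In y (y1::y2::y3::nil))) in *.
      assert (Hcov : is_covering_number d V m (covering_number d V m)).
      { apply cov_exists. exists ((x0,y3)::nil). split; [|split].
        - constructor; [intros []|constructor].
        - intros p [<-|[]]. unfold V, setX; simpl. intuition.
        - intros [vx vy] [Hvx Hvy]; simpl in Hvx, Hvy. exists (x0,y3). split; [left; auto|].
          unfold cball. destruct Hvx as [<-|[]]. rewrite HpY.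
          destruct Hvy as [<-|[<-|[<-|[]]]]; try lra.
          rewrite Ys; lra.
          assert (dY y3 y3 = 0) by (apply Yz; auto). lra. }
      assert (Hpack : is_packing_number d V m (packing_number d V m)).
      { apply (pack_exists _ _ _ (list_prod (x0::nil) (y1::y2::y3::nil))).
        intros [a b] [Ha Hb]. apply in_prod; auto. }
      assert (Hne : y1 <> y2).
      { intro E; subst. assert (dY y2 y2 = 0) by (apply Yz; auto). lra. }
      pose proof (proj2 Hcov ((x0,y3)::nil)) as C1.
      pose proof (proj2 Hpack ((x0,y1)::(x0,y2)::nil)) as P1.
      assert (covering_number d V m <= 1)%nat.
      { apply C1.
        - constructor; [intros []|constructor].
        - intros p [<-|[]]. unfold V, setX; simpl. intuition.
        - intros [vx vy] [Hvx Hvy]; simpl in Hvx, Hvy. exists (x0,y3). split; [left; auto|].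
          unfold cball. destruct Hvx as [<-|[]]. rewrite HpY.
          destruct Hvy as [<-|[<-|[<-|[]]]]; try lra.
          rewrite Ys; lra.
          assert (dY y3 y3 = 0) by (apply Yz; auto). lra. }
      assert (2 <= packing_number d V m)%nat.
      { apply P1.
        - constructor.
          + intros [E|[]]. injection E; intros; subst; apply Hne; auto.
          + constructor; [intros []|constructor].
        - intros p [<-|[<-|[]]]; unfold V, setX; simpl; intuition.
        - intros a b [<-|[<-|[]]] [<-|[<-|[]]] Hab; try (exfalso; apply Hab; reflexivity);
            rewrite HpY; [|rewrite Ys]; lra. }
      lia. }
    assert (Hdle : forall x1 y1 x2 y2, d (x1,y1) (x2,y2) <= Rmax (dX x1 x2) (dY y1 y2)).
    { intros x1 y1 x2 y2.
      set (m := Rmax (dX x1 x2) (dY y1 y2)).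
      assert (H1 : dX x1 x2 <= m) by apply Rmax_l.
      assert (H2 : dY y1 y2 <= m) by apply Rmax_r.
      destruct (Rle_dec (d (x1,y1) (x2,y2)) m) as [ok|Hgt]; [exact ok|exfalso].
      apply Rnot_le_lt in Hgt.
      pose proof (Xpos x1 x2).
      assert (Hne : (x1,y1) <> (x2,y2)).
      { intro He. rewrite He in Hgt.
        assert (d (x2,y2) (x2,y2) = 0) by (apply Dz; auto). lra. }
      assert (Hm : 0 < m).
      { destruct (Rle_lt_dec m 0) as [Hle|]; auto. exfalso.
        pose proof (Ypos y1 y2).
        apply Hne. f_equal; [apply Xz|apply Yz]; lra. }
      destruct (Hc (fun x => In x (x1::x2::nil)) (fun y => In y (y1::y2::nil)) m
        (compact_list _ _) (compact_list _ _) Hm) as [_ Hprod].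
      assert (HpW := pack_exists dX (fun x => In x (x1::x2::nil)) m (x1::x2::nil) (fun x H => H)).
      assert (HpZ := pack_exists dY (fun y => In y (y1::y2::nil)) m (y1::y2::nil) (fun x H => H)).
      assert (HpP : is_packing_number d (setX (fun x => In x (x1::x2::nil)) (fun y => In y (y1::y2::nil))) m
        (packing_number d (setX (fun x => In x (x1::x2::nil)) (fun y => In y (y1::y2::nil))) m)).
      { apply (pack_exists _ _ _ (list_prod (x1::x2::nil) (y1::y2::nil))).
        intros [a b] [Ha Hb]. apply in_prod; auto. }
      assert (LW : (packing_number dX (fun x => In x (x1::x2::nil)) m <= 1)%nat).
      { destruct HpW as [[A [a [b [c e]]]] _]. rewrite <- e.
        apply (two_points dX x1 x2 m); auto. rewrite Xs; auto. }
      assert (LZ : (packing_number dY (fun y => In y (y1::y2::nil)) m <= 1)%nat).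
      { destruct HpZ as [[A [a [b [c e]]]] _]. rewrite <- e.
        apply (two_points dY y1 y2 m); auto. rewrite Ys; auto. }
      assert (L2 : (2 <= packing_number d (setX (fun x => In x (x1::x2::nil)) (fun y => In y (y1::y2::nil))) m)%nat).
      { apply (proj2 HpP ((x1,y1)::(x2,y2)::nil)).
        - constructor.
          + intros [E|[]]. apply Hne; auto.
          + constructor; [intros []|constructor].
        - intros p [<-|[<-|[]]]; unfold setX; simpl; intuition.
        - intros a b [<-|[<-|[]]] [<-|[<-|[]]] Hab; try (exfalso; apply Hab; reflexivity);
            [|rewrite Ds]; lra. }
      rewrite Hprod in L2. nia. }
    intros [a1 a2] [b1 b2] [c1 c2].
    assert (E : forall x1 y1 x2 y2, d (x1,y1) (x2,y2) = Rmax (dX x1 x2) (dY y1 y2)).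
    { intros. apply Rle_antisym; auto.
      pose proof (hinf (x1,y1) (x2,y2)). unfold d_inf in H; simpl in H. exact H. }
    rewrite !E. apply rmax_combine; [apply (HXu a2)|apply (HYu a1)].
Qed.
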